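(* For every $n\in\mathbb N$ there is a deterministic online monotone embedding (which may depend on $n$) of up to $n$ points from any metric space into HSTs with distortion $n-1$, and this is tight: no deterministic online monotone embedding of up to $n$ points from all metric spaces into HSTs achieves distortion less than $n-1$. Without prior knowledge of $n$ (i.e., a single embedding used for all $n$), the optimal achievable distortion for sequences of $n$ points is $n\cdot\tilde\Theta(\log n)$, where $\tilde\Theta$ hides factors polylogarithmic in $\log n$; this bound is also tight.
   Context: For $\mu \ge 1$, a $\mu$-HST is a metric space whose points are the leaves of a rooted tree $T$; every node $v$ has a weight $\varphi(v)\ge 0$, with $\varphi(v)=0$ iff $v$ is a leaf, and $\varphi(v)\le\varphi(u)/\mu$ whenever $v$ is a child of $u$; the distance between leaves $u,v$ is $\varphi(\mathrm{lca}(u,v))$. ''HSTs'' denotes the family of such metrics. An update sequence on $(X,d_X)$ is a sequence of pairs $(v_t,o_t)\in X\times\{+,-\}$ ($v_t$ arrives if $o_t=+$, leaves if $o_t=-$), with alive sets $L_0=\varnothing$, $L_t=L_{t-1}\cup\{v_t\}$ or $L_{t-1}\setminus\{v_t\}$ accordingly. A deterministic online monotone embedding into a family $\mathcal M$ receives $\sigma_1,\sigma_2,\dots$ one at a time and after $\sigma_t$ (depending only on $\sigma_1,\dots,\sigma_t$) outputs a metric $d_t$ on $L_t$ with: $(L_t,d_t)\in\mathcal M$; $d_t(u,v)\ge d_X(u,v)$ for all $u,v\in L_t$ (non-contractive); $d_t(u,v)\le d_{t-1}(u,v)$ for all $u,v\in L_{t-1}\cap L_t$. It has distortion $\lambda$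 if $d_t(u,v)\le\lambda d_X(u,v)$ for all sequences in the considered class, all $t$, and all $u,v\in L_t$. ''Up to $n$ points'' refers to sequences in which at most $n$ points arrive. *)

(* Defs.v *)
From Stdlib Require Import Reals List.
Import ListNotations.
Open Scope R_scope.
Set Implicit Arguments.

Definition is_metric (X : Type) (d : X -> X -> R) : Prop :=
  (forall x y, 0 <= d x y) /\
  (forall x y, d x y = 0 <-> x = y) /\
  (forall x y, d x y = d y x) /\
  (forall x y z, d x z <= d x y + d y z).

(* A rooted tree whose leaves are labelled by points of X; internal nodes
   carry their weight phi(v). Leaves have weight 0. *)
Inductive tree (X : Type) : Type :=
| Leaf : X -> tree X
| Node : R -> list (tree X) -> tree X.
Arguments Leaf {X} _.
Arguments Node {X} _ _.

Fixpoint leaves (X : Type) (t : tree X) : list X :=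
  match t with
  | Leaf x => [x]
  | Node _ cs => flat_map (@leaves X) cs
  end.

Definition weight (X : Type) (t : tree X) : R :=
  match t with Leaf _ => 0 | Node w _ => w end.

(* mu-HST condition: internal nodes have at least one child (so that a node
   is a leaf iff it has weight 0), positive weight, and each child has weight
   at most the parent's weight divided by mu. *)
Inductive hst_wf (X : Type) (mu : R) : tree X -> Prop :=
| hst_wf_leaf x : hst_wf mu (Leaf x)
| hst_wf_node w cs :
    cs <> [] -> 0 < w ->
    (forall c, In c cs -> hst_wf mu c /\ weight c <= w / mu) ->
    hst_wf mu (Node w cs).

Inductive lca_weight (X : Type) : tree X -> X -> X -> R -> Prop :=
| lca_leaf x : lca_weight (Leaf x) x x 0
| lca_down w cs c u v r :
    In c cs -> lca_weight c u v r -> lca_weight (Node w cs) u v r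
| lca_here w cs cu cv u v :
    In cu cs -> In cv cs -> cu <> cv ->
    In u (leaves cu) -> In v (leaves cv) -> lca_weight (Node w cs) u v w.

(* The empty metric space is counted as an HST. *)
Definition in_HSTs (X : Type) (L : X -> Prop) (dt : X -> X -> R) : Prop :=
  (forall x, ~ L x) \/
  exists (mu : R) (T : tree X),
    1 <= mu /\ hst_wf mu T /\ NoDup (leaves T) /\
    (forall x, L x <-> In x (leaves T)) /\
    (forall u v, L u -> L v -> lca_weight T u v (dt u v)).

(* An (finite prefix of an) update sequence, in chronological order:
   (v, true) means v arrives (+), (v, false) means v leaves (-). *)
Definition update_seq (X : Type) := list (X * bool).

Definition alive_step (X : Type) (L : X -> Prop) (p : X * bool) : X -> Prop :=
  fun x => if snd p then (x = fst p \/ L x) else (x <> fst p /\ L x).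

(* alive s = L_t where t = length s *)
Definition alive (X : Type) (s : update_seq X) : X -> Prop :=
  fold_left (@alive_step X) s (fun _ => False).

Definition at_most_n_points (X : Type) (n : nat) (s : update_seq X) : Prop :=
  exists l : list X, (length l <= n)%nat /\ forall x, In (x, true) s -> In x l.

(* A deterministic online embedding is a map from the history
   sigma_1 ... sigma_t to the output metric d_t (only its values on L_t matter);
   it thus depends only on sigma_1, ..., sigma_t. *)
Definition online_embedding (X : Type) := update_seq X -> X -> X -> R.

Definition monotone_HST_embedding (X : Type) (d : X -> X -> R)
    (C : update_seq X -> Prop) (E : online_embedding X) : Prop :=
  forall (s : update_seq X) (sg : X * bool), C (s ++ [sg]) ->
    let L := alive (s ++ [sg]) in
    let L' := alive s in
    in_HSTs L (E (s ++ [sg])) /\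
    (forall u v, L u -> L v -> d u v <= E (s ++ [sg]) u v) /\
    (forall u v, L' u -> L' v -> L u -> L v -> E (s ++ [sg]) u v <= E s u v).

Definition has_distortion (X : Type) (d : X -> X -> R)
    (C : update_seq X -> Prop) (E : online_embedding X) (lam : R) : Prop :=
  forall s, C s -> forall u v, alive s u -> alive s v -> E s u v <= lam * d u v.

(* Main.v *)
Require Import Defs.
From Stdlib Require Import Reals List.
From Stdlib Require Import Lra Lia Classical ClassicalEpsilon ClassicalDescription.
Import ListNotations.
Open Scope R_scope.
Set Implicit Arguments.

Lemma nodup_app_disj (A : Type) (l1 l2 : list A) x :
  NoDup (l1 ++ l2) -> In x l1 -> In x l2 -> False.
Proof.
  induction l1 as [|a l1 IH]; simpl; intros Hn H1 H2; [easy|].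
  inversion Hn; subst. destruct H1 as [<-|H1].
  - apply H3. apply in_or_app; now right.
  - eauto.
Qed.

Lemma nodup_child (X : Type) (cs : list (tree X)) c :
  NoDup (flat_map (@leaves X) cs) -> In c cs -> NoDup (leaves c).
Proof.
  induction cs as [|a cs IH]; simpl; [easy|]. intros Hn [<-|H].
  - eapply NoDup_app_remove_r; eauto.
  - apply IH; auto. eapply NoDup_app_remove_l; eauto.
Qed.

Lemma nodup_same_child (X : Type) (cs : list (tree X)) c1 c2 x :
  NoDup (flat_map (@leaves X) cs) -> In c1 cs -> In c2 cs ->
  In x (leaves c1) -> In x (leaves c2) -> c1 = c2.
Proof.
  induction cs as [|a cs IH]; simpl; [easy|]. intros Hn H1 H2 Hx1 Hx2.
  destruct H1 as [<-|H1]; destruct H2 as [<-|H2]; auto.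
  - exfalso. apply (nodup_app_disj _ _ x Hn); auto. apply in_flat_map; eauto.
  - exfalso. apply (nodup_app_disj _ _ x Hn); auto. apply in_flat_map; eauto.
  - apply IH; auto. eapply NoDup_app_remove_l; eauto.
Qed.

Lemma lca_in (X : Type) (T : tree X) u v r :
  lca_weight T u v r -> In u (leaves T) /\ In v (leaves T).
Proof.
  induction 1; simpl; auto.
  - destruct IHlca_weight; split; apply in_flat_map; eauto.
  - split; apply in_flat_map; eauto.
Qed.

Lemma hst_node_inv (X : Type) mu w (cs : list (tree X)) :
  hst_wf mu (Node w cs) -> 0 < w /\ forall c, In c cs -> hst_wf mu c /\ weight c <= w / mu.
Proof. intros H; inversion H; subst; auto. Qed.

Lemma lca_node_inv (X : Type) w (cs : list (tree X)) u v r :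
  lca_weight (Node w cs) u v r -> r = w \/ exists c, In c cs /\ lca_weight c u v r.
Proof. intros H; inversion H; subst; eauto. Qed.

Lemma lca_nonneg (X : Type) mu (T : tree X) u v r :
  lca_weight T u v r -> hst_wf mu T -> 0 <= r.
Proof.
  induction 1; intros Hw.
  - lra.
  - apply hst_node_inv in Hw as [_ Hc]. apply IHlca_weight, Hc; auto.
  - apply hst_node_inv in Hw as [Hp _]. lra.
Qed.

Lemma div_mu_le w mu : 0 < w -> 1 <= mu -> w / mu <= w.
Proof.
  intros. assert (w / mu * mu = w) by (field; lra).
  assert (0 < w / mu) by (apply Rdiv_lt_0_compat; lra). nra.
Qed.

Lemma lca_le_weight (X : Type) mu (T : tree X) u v r :
  1 <= mu -> lca_weight T u v r -> hst_wf mu T -> r <= weight T.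
Proof.
  intros Hmu. induction 1; intros Hw; simpl.
  - lra.
  - apply hst_node_inv in Hw as [Hp Hc]. destruct (Hc c H) as [Hc1 Hc2].
    specialize (IHlca_weight Hc1). pose proof (div_mu_le Hp Hmu). lra.
  - lra.
Qed.

Lemma lca_zero (X : Type) (T : tree X) u v r :
  lca_weight T u v r -> u = v -> NoDup (leaves T) -> r = 0.
Proof.
  induction 1; intros He Hn; subst; auto.
  - apply IHlca_weight; auto. eapply nodup_child; eauto.
  - exfalso. apply H1. simpl in Hn. exact (@nodup_same_child _ cs cu cv v Hn H H0 H2 H3).
Qed.

Lemma lca_ultra (X : Type) mu (T : tree X) x z c :
  1 <= mu -> lca_weight T x z c -> hst_wf mu T -> NoDup (leaves T) ->
  forall y a b, lca_weight T x y a -> lca_weight T y z b -> c <= Rmax a b.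
Proof.
  intros Hmu. induction 1; intros Hw Hn y a b Ha Hb.
  - pose proof (lca_nonneg Ha Hw). pose proof (Rmax_l a b). lra.
  - pose proof (hst_node_inv Hw) as [Hp Hc].
    destruct (Hc c H) as [Hcw Hcle].
    pose proof (lca_le_weight Hmu H0 Hcw). pose proof (div_mu_le Hp Hmu).
    destruct (lca_node_inv Ha) as [->|[c1 [Hc1 Ha1]]].
    { pose proof (Rmax_l w b). lra. }
    destruct (lca_node_inv Hb) as [->|[c2 [Hc2 Hb2]]].
    { pose proof (Rmax_r a w). lra. }
    destruct (lca_in H0) as [Hxc Hzc]. destruct (lca_in Ha1) as [Hx1 Hy1].
    destruct (lca_in Hb2) as [Hy2 Hz2].
    simpl in Hn.
    assert (c1 = c) by exact (@nodup_same_child _ cs c1 c u Hn Hc1 H Hx1 Hxc). subst c1.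
    assert (c2 = c) by exact (@nodup_same_child _ cs c2 c v Hn Hc2 H Hz2 Hzc). subst c2.
    eapply IHlca_weight; eauto. eapply nodup_child; eauto.
  - destruct (lca_node_inv Ha) as [->|[c1 [Hc1 Ha1]]].
    { pose proof (Rmax_l w b). lra. }
    destruct (lca_node_inv Hb) as [->|[c2 [Hc2 Hb2]]].
    { pose proof (Rmax_r a w). lra. }
    destruct (lca_in Ha1) as [Hx1 Hy1]. destruct (lca_in Hb2) as [Hy2 Hz2].
    exfalso. simpl in Hn.
    assert (c1 = cu) by exact (@nodup_same_child _ cs c1 cu u Hn Hc1 H Hx1 H2). subst c1.
    assert (c2 = cv) by exact (@nodup_same_child _ cs c2 cv v Hn Hc2 H0 Hz2 H3). subst c2.
    apply H1. exact (@nodup_same_child _ cs cu cv y Hn H H0 Hy1 Hy2).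
Qed.

Lemma hst_ultra (X : Type) (L : X -> Prop) dt x y z :
  in_HSTs L dt -> L x -> L y -> L z -> dt x z <= Rmax (dt x y) (dt y z).
Proof.
  intros [H|[mu [T [Hmu [Hw [Hn [HL Hl]]]]]]] Hx Hy Hz.
  - exfalso; eapply H; eauto.
  - eapply lca_ultra; eauto.
Qed.

Lemma hst_zero (X : Type) (L : X -> Prop) dt x :
  in_HSTs L dt -> L x -> dt x x = 0.
Proof.
  intros [H|[mu [T [Hmu [Hw [Hn [HL Hl]]]]]]] Hx.
  - exfalso; eapply H; eauto.
  - eapply lca_zero; eauto.
Qed.


Lemma fold_max_ge (X : Type) (f : X -> R) (l : list X) z :
  In z l -> f z <= fold_right Rmax 0 (map f l).
Proof.
  induction l as [|a l IH]; simpl; [easy|]. intros [<-|H].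
  - apply Rmax_l.
  - eapply Rle_trans; [apply IH; auto| apply Rmax_r].
Qed.

Lemma fold_max_att (X : Type) (f : X -> R) (l : list X) :
  l <> [] -> (forall z, In z l -> 0 <= f z) ->
  exists z, In z l /\ fold_right Rmax 0 (map f l) = f z.
Proof.
  induction l as [|a l IH]; simpl; [easy|]. intros _ Hp.
  destruct l as [|b l].
  - exists a; split; auto. simpl. apply Rmax_left. apply Hp; auto.
  - destruct IH as [z [Hz Hfz]]; [easy| intros; apply Hp; auto|].
    rewrite Hfz. destruct (Rle_dec (f z) (f a)).
    + exists a; split; auto. apply Rmax_left; auto.
    + exists z; split; auto. apply Rmax_right; lra.
Qed.

Section Build.
Variable X : Type.
Variable Q : X -> Prop.
Variable U : X -> X -> R.
Hypothesis H0 : forall x, Q x -> U x x = 0.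
Hypothesis Hpos : forall x y, Q x -> Q y -> x <> y -> 0 < U x y.
Hypothesis Hsym : forall x y, Q x -> Q y -> U x y = U y x.
Hypothesis Hult : forall x y z, Q x -> Q y -> Q z -> U x z <= Rmax (U x y) (U y z).

Lemma U_nonneg x y : Q x -> Q y -> 0 <= U x y.
Proof.
  intros. destruct (classic (x = y)) as [<-|Hn].
  - rewrite H0; auto; lra.
  - apply Rlt_le, Hpos; auto.
Qed.

Definition build_spec (l : list X) (T : tree X) :=
  hst_wf 1 T /\ NoDup (leaves T) /\ (forall x, In x l <-> In x (leaves T)) /\
  (forall u v, In u l -> In v l -> lca_weight T u v (U u v)) /\
  exists u v, In u l /\ In v l /\ weight T = U u v.

Lemma build_tree_n n : forall l, (length l <= n)%nat -> NoDup l -> l <> [] ->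
  (forall x, In x l -> Q x) -> exists T, build_spec l T.
Proof.
  induction n as [|n IH]; intros l Hlen Hnd Hne HQ.
  { destruct l; simpl in *; [easy|lia]. }
  destruct l as [|x0 [|y rest]]; [easy| |].
  - exists (Leaf x0). unfold build_spec; simpl. repeat split.
    + constructor.
    + constructor; [auto|constructor].
    + tauto.
    + tauto.
    + intros u v [<-|[]] [<-|[]]. rewrite H0 by (apply HQ; simpl; auto). constructor.
    + exists x0, x0. repeat split; auto. rewrite H0 by (apply HQ; simpl; auto); auto.
  - set (l := x0 :: y :: rest) in *.
    set (M := fold_right Rmax 0 (map (U x0) l)).
    assert (HQ0 : Q x0) by (apply HQ; simpl; auto).
    assert (HM : forall z, In z l -> U x0 z <= M) by (intros; apply fold_max_ge; auto).
    destruct (@fold_max_att _ (U x0) l) as [zM [HzM HUzM]]; [easy| intros; apply U_nonneg; auto|].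
    fold M in HUzM.
    assert (Hx0y : x0 <> y) by (intro; subst; inversion Hnd; subst; simpl in *; tauto).
    assert (HMpos : 0 < M).
    { apply Rlt_le_trans with (U x0 y); [apply Hpos; auto; apply HQ; simpl; auto|apply HM; simpl; auto]. }
    assert (Hall : forall u v, In u l -> In v l -> U u v <= M).
    { intros u v Hu Hv. eapply Rle_trans; [apply (@Hult u x0 v); auto|].
      rewrite Hsym by auto. apply Rmax_lub; auto. }
    set (f := fun z => if Rlt_dec (U x0 z) M then true else false).
    set (C := filter f l). set (Rr := filter (fun z => negb (f z)) l).
    assert (HC : forall z, In z C <-> In z l /\ U x0 z < M).
    { intros z. unfold C. rewrite filter_In. unfold f.
      destruct (Rlt_dec (U x0 z) M); split; intros [? ?]; try split; auto; try easy. }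
    assert (HR : forall z, In z Rr <-> In z l /\ U x0 z = M).
    { intros z. unfold Rr. rewrite filter_In. unfold f.
      destruct (Rlt_dec (U x0 z) M); simpl; split; intros [? ?]; try split; auto; try easy.
      - lra.
      - pose proof (HM z H). lra. }
    assert (Hlen2 := filter_length f l). fold C in Hlen2. fold Rr in Hlen2.
    assert (HCne : In x0 C) by (apply HC; split; [simpl; auto| rewrite H0; auto]).
    assert (HRne : In zM Rr) by (apply HR; split; auto).
    assert (HlC : (length C <= n)%nat).
    { destruct Rr; [easy|]. simpl in Hlen2. simpl in Hlen. lia. }
    assert (HlR : (length Rr <= n)%nat).
    { destruct C; [easy|]. simpl in Hlen2. simpl in Hlen. lia. }
    destruct (IH C HlC) as [TC [HwC [HnC [HmC [HlcC [uc [vc [Huc [Hvc HwtC]]]]]]]]].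
    { apply NoDup_filter; auto. } { intro E; rewrite E in HCne; easy. }
    { intros z Hz; apply HC in Hz; apply HQ; tauto. }
    destruct (IH Rr HlR) as [TR [HwR [HnR [HmR [HlcR [ur [vr [Hur [Hvr HwtR]]]]]]]]].
    { apply NoDup_filter; auto. } { intro E; rewrite E in HRne; easy. }
    { intros z Hz; apply HR in Hz; apply HQ; tauto. }
    assert (Hdisj : forall z, In z C -> In z Rr -> False).
    { intros z H1 H2. apply HC in H1. apply HR in H2. lra. }
    assert (Hcross : forall u v, In u C -> In v Rr -> U u v = M).
    { intros u v Hu Hv. apply HC in Hu as [Hu Hu']. apply HR in Hv as [Hv Hv'].
      apply Rle_antisym; [apply Hall; auto|].
      pose proof (@Hult x0 u v HQ0 (HQ u Hu) (HQ v Hv)).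
      rewrite Hv' in H. apply Rmax_Rle in H. destruct H; auto. lra. }
    assert (HTne : TC <> TR).
    { intro E. apply (Hdisj x0); auto. apply HmR. rewrite <- E. apply HmC; auto. }
    exists (Node M [TC; TR]). unfold build_spec. simpl.
    split; [|split; [|split; [|split]]].
    + constructor; [easy|auto|]. rewrite Rdiv_1_r.
      intros c [<-|[<-|[]]]; split; auto.
      * rewrite HwtC. apply Hall; [apply HC in Huc| apply HC in Hvc]; tauto.
      * rewrite HwtR. apply Hall; [apply HR in Hur| apply HR in Hvr]; tauto.
    + rewrite app_nil_r. apply NoDup_app; auto.
      intros a Ha Hb. apply (Hdisj a); [apply HmC|apply HmR]; auto.
    + intros z. rewrite app_nil_r, in_app_iff, <- HmC, <- HmR, HC, HR.
      split.
      * intros Hz. destruct (Rlt_dec (U x0 z) M); [left|right]; split; auto.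
        pose proof (HM z Hz). lra.
      * intros [[? ?]|[? ?]]; auto.
    + intros u v Hu Hv.
      assert (Hu' : In u C \/ In u Rr).
      { destruct (Rlt_dec (U x0 u) M); [left; apply HC|right; apply HR]; split; auto.
        pose proof (HM u Hu). lra. }
      assert (Hv' : In v C \/ In v Rr).
      { destruct (Rlt_dec (U x0 v) M); [left; apply HC|right; apply HR]; split; auto.
        pose proof (HM v Hv). lra. }
      destruct Hu' as [Hu'|Hu']; destruct Hv' as [Hv'|Hv'].
      * apply lca_down with TC; simpl; auto.
      * rewrite Hcross by auto. apply lca_here with TC TR; simpl; auto.
        apply HmC; auto. apply HmR; auto.
      * rewrite Hsym by (apply HQ; auto). rewrite Hcross by auto.
        apply lca_here with TR TC; simpl; auto.
        apply HmR; auto. apply HmC; auto.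
      * apply lca_down with TR; simpl; auto.
    + exists x0, zM. repeat split; simpl; auto.
Qed.

End Build.


Definition dec {X : Type} : forall x y : X, {x = y} + {x <> y} :=
  fun x y => excluded_middle_informative (x = y).

Lemma NoDup_rem (X : Type) (x : X) l : NoDup l -> NoDup (remove dec x l).
Proof.
  induction l as [|a l IH]; simpl; intros Hn; auto.
  inversion Hn; subst. destruct (dec x a); auto. constructor; auto.
  intro H. apply in_remove in H. tauto.
Qed.

Lemma alive_app1 (X : Type) (s : update_seq X) p x :
  alive (s ++ [p]) x <-> (if snd p then x = fst p \/ alive s x else x <> fst p /\ alive s x).
Proof. unfold alive. rewrite fold_left_app. simpl. unfold alive_step. tauto. Qed.

Lemma alive_list (X : Type) (s : update_seq X) :
  exists l, NoDup l /\ forall x, alive s x <-> In x l.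
Proof.
  induction s as [|p s IH] using rev_ind.
  - exists []. split; [constructor|]. intros x. unfold alive; simpl; tauto.
  - destruct IH as [l [Hn Hl]]. destruct p as [v [|]].
    + exists (v :: remove dec v l). split.
      * constructor; [apply remove_In| apply NoDup_rem; auto].
      * intros x. rewrite alive_app1. simpl. rewrite Hl.
        destruct (dec x v); [subst; tauto|].
        split; [intros [E|H]; [tauto| right; apply in_in_remove; auto]|].
        intros [E|H]; [auto|]. right. apply in_remove in H; tauto.
    + exists (remove dec v l). split; [apply NoDup_rem; auto|].
      intros x. rewrite alive_app1. simpl. rewrite Hl.
      split; [intros [H1 H2]; apply in_in_remove; auto|].
      intros H. apply in_remove in H. tauto.
Qed.

Definition arr_step {X : Type} (acc : list X) (p : X * bool) : list X :=
  if snd p then (if in_dec dec (fst p) acc then acc else acc ++ [fst p]) else acc.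
Definition arrived {X : Type} (s : update_seq X) : list X := fold_left arr_step s [].

Lemma arrived_app1 (X : Type) (s : update_seq X) p :
  arrived (s ++ [p]) = arr_step (arrived s) p.
Proof. unfold arrived. rewrite fold_left_app. reflexivity. Qed.

Lemma arrived_nodup (X : Type) (s : update_seq X) : NoDup (arrived s).
Proof.
  induction s as [|p s IH] using rev_ind; [constructor|].
  rewrite arrived_app1. unfold arr_step.
  destruct (snd p); auto. destruct (in_dec dec (fst p) (arrived s)); auto.
  apply NoDup_app; auto. repeat constructor; auto.
  intros a Ha [<-|[]]; auto.
Qed.

Lemma arrived_in (X : Type) (s : update_seq X) x :
  In x (arrived s) <-> In (x, true) s.
Proof.
  induction s as [|p s IH] using rev_ind; [simpl; tauto|].
  rewrite arrived_app1, in_app_iff. unfold arr_step. destruct p as [v [|]]; simpl.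
  - destruct (in_dec dec v (arrived s)).
    + rewrite IH. split; [tauto|]. intros [H|[H|[]]]; auto. inversion H; subst. apply IH; auto.
    + rewrite in_app_iff, IH. simpl. split; intros [H|[H|H]]; auto.
      * subst; auto.
      * inversion H; subst; auto.
  - rewrite IH. split; [tauto|]. intros [H|[H|[]]]; auto. inversion H.
Qed.

Lemma alive_arrived (X : Type) (s : update_seq X) x : alive s x -> In x (arrived s).
Proof.
  intros H. apply arrived_in.
  induction s as [|p s IH] using rev_ind; [unfold alive in H; simpl in H; easy|].
  apply in_or_app. apply alive_app1 in H. destruct p as [v [|]]; simpl in H.
  - destruct H as [->|H]; [right; simpl; auto| left; auto].
  - left; tauto.
Qed.

Lemma arrived_prefix (X : Type) (s : update_seq X) p :
  exists t, arrived (s ++ [p]) = arrived s ++ t.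
Proof.
  rewrite arrived_app1. unfold arr_step. destruct (snd p).
  - destruct (in_dec dec (fst p) (arrived s)); eauto. exists []; rewrite app_nil_r; auto.
  - exists []; rewrite app_nil_r; auto.
Qed.

Lemma arrived_incl (X : Type) (s : update_seq X) p x :
  In x (arrived s) -> In x (arrived (s ++ [p])).
Proof.
  destruct (arrived_prefix s p) as [t ->]. intros; apply in_or_app; auto.
Qed.

Lemma arrived_len (X : Type) n (s : update_seq X) :
  at_most_n_points n s -> (length (arrived s) <= n)%nat.
Proof.
  intros [l [Hl Hin]]. eapply Nat.le_trans; [|apply Hl].
  apply NoDup_incl_length; [apply arrived_nodup|].
  intros x Hx. apply Hin. apply arrived_in; auto.
Qed.

Fixpoint idx {X : Type} (x : X) (l : list X) : nat :=
  match l with [] => 0%nat | a :: l' => if dec x a then 0%nat else S (idx x l') end.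

Lemma idx_app (X : Type) (x : X) l t : In x l -> idx x (l ++ t) = idx x l.
Proof.
  induction l as [|a l IH]; simpl; [easy|]. intros [->|H].
  - destruct (dec x x); auto; easy.
  - destruct (dec x a); auto.
Qed.

Lemma idx_lt (X : Type) (x : X) l : In x l -> (idx x l < length l)%nat.
Proof.
  induction l as [|a l IH]; simpl; [easy|]. intros [->|H].
  - destruct (dec x x); [lia| easy].
  - destruct (dec x a); [lia|]. specialize (IH H). lia.
Qed.

Definition sumf {X : Type} (g : X -> R) (l : list X) : R :=
  fold_right (fun w acc => g w + acc) 0 l.

Fixpoint sumN (f : nat -> R) (N : nat) : R :=
  match N with O => 0 | S k => sumN f k + f k end.

Lemma sumN_shift f N : sumN f (S N) = f 0%nat + sumN (fun j => f (S j)) N.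
Proof. induction N as [|N IH]; simpl in *; [lra|]. rewrite IH. lra. Qed.

Lemma sumf_ext (X : Type) (g h : X -> R) l :
  (forall w, In w l -> g w = h w) -> sumf g l = sumf h l.
Proof.
  induction l as [|a l IH]; simpl; auto. intros H. rewrite H, IH; auto.
Qed.

Lemma sumf_idx (X : Type) (l : list X) : forall f, NoDup l ->
  sumf (fun w => f (idx w l)) l = sumN f (length l).
Proof.
  induction l as [|a l IH]; intros f Hn; [reflexivity|].
  inversion Hn; subst. change (length (a :: l)) with (S (length l)). rewrite sumN_shift.
  rewrite <- (IH (fun j => f (S j))) by auto.
  unfold sumf at 1. cbn [fold_right]. fold (sumf (fun w => f (idx w (a :: l))) l).
  cbn [idx]. destruct (dec a a); [|easy]. f_equal.
  apply sumf_ext. intros w Hw. cbn [idx]. destruct (dec w a); auto. subst; easy.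
Qed.

Lemma sumf_nonneg (X : Type) (g : X -> R) l : (forall a, 0 <= g a) -> 0 <= sumf g l.
Proof. intros H. induction l; simpl; auto; [lra|]. specialize (H a). lra. Qed.

Lemma sumf_remove (X : Type) (g : X -> R) l x :
  NoDup l -> In x l -> sumf g l = g x + sumf g (remove dec x l).
Proof.
  induction l as [|a l IH]; simpl; [easy|]. intros Hn Hx. inversion Hn; subst.
  destruct (dec x a) as [->|Hne].
  - rewrite notin_remove; auto.
  - destruct Hx as [->|Hx]; [easy|]. simpl. rewrite IH; auto. lra.
Qed.

Lemma sumf_remove_le (X : Type) (g : X -> R) l x :
  (forall a, 0 <= g a) -> sumf g (remove dec x l) <= sumf g l.
Proof.
  intros Hg. induction l as [|a l IH]; simpl; [lra|].
  destruct (dec x a); simpl; specialize (Hg a); lra.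
Qed.

Lemma sumf_const (X : Type) c (l : list X) : sumf (fun _ => c) l = INR (length l) * c.
Proof.
  induction l as [|a l IH]; [simpl; lra|]. unfold sumf in *; cbn [fold_right length].
  rewrite IH, S_INR. lra.
Qed.


Inductive walk {X : Type} (W : list X) (phi : X -> X -> R) (m : R) : X -> X -> Prop :=
| wrefl x : walk W phi m x x
| wstep x z y : In z W -> phi x z <= m -> walk W phi m z y -> walk W phi m x y.

Section Walks.
Variable X : Type.
Implicit Types W : list X.

Lemma walk_mono W phi m m' x y : m <= m' -> walk W phi m x y -> walk W phi m' x y.
Proof. intros Hm. induction 1; [constructor|]. apply wstep with z; auto; lra. Qed.

Lemma walk_app W phi m x y z : walk W phi m x y -> walk W phi m y z -> walk W phi m x z.
Proof. induction 1; auto. intros. apply wstep with z0; auto. Qed.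

Lemma walk_rev W phi m x y : (forall a b, In a W -> In b W -> phi a b = phi b a) ->
  In x W -> walk W phi m x y -> walk W phi m y x.
Proof.
  intros Hs Hx H. induction H; [constructor|].
  apply walk_app with z; auto. apply wstep with x; auto. rewrite Hs; auto. constructor.
Qed.

Lemma walk_sub W W' phi phi' m x y : incl W W' ->
  (forall a b, In a W -> In b W -> phi' a b = phi a b) ->
  In x W -> walk W phi m x y -> walk W' phi' m x y.
Proof.
  intros Hi He Hx H. induction H; [constructor|]. apply wstep with z; auto.
  rewrite He; auto.
Qed.

Lemma walk_avoid W phi m x a y : walk W phi m a y -> y <> x ->
  (a <> x /\ walk (remove dec x W) phi m a y) \/
  (exists v, In v (remove dec x W) /\ phi x v <= m /\ walk (remove dec x W) phi m v y).
Proof.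
  induction 1 as [a|a z y Hz Hp Hw IH]; intros Hy.
  - left; split; auto. constructor.
  - destruct (IH Hy) as [[Hzx Hw']|[v [Hv [Hpv Hw']]]].
    + destruct (dec a x) as [->|Hax].
      * right. exists z. split; auto. apply in_in_remove; auto.
      * left. split; auto. apply wstep with z; auto. apply in_in_remove; auto.
    + right. eauto.
Qed.

Lemma walk_bound (d : X -> X -> R) (Hd : is_metric d) (S : list X) phi g m
  (Hg : forall a, 0 <= g a)
  (Hdp : forall a b, In a S -> In b S -> d a b <= phi a b * g a) (Hm : 0 <= m) :
  forall n W, (length W <= n)%nat -> NoDup W -> incl W S ->
  forall x y, In x W -> walk W phi m x y -> d x y <= m * sumf g (remove dec y W).
Proof.
  destruct Hd as [Hd0 [Hd1 [Hd2 Hd3]]].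
  induction n as [|n IH]; intros W Hl Hn Hi x y Hx Hw.
  { destruct W; simpl in *; [easy|lia]. }
  destruct (dec x y) as [->|Hxy].
  { assert (d y y = 0) by (apply Hd1; auto). rewrite H.
    pose proof (sumf_nonneg g (remove dec y W) Hg). nra. }
  destruct (walk_avoid Hw (not_eq_sym Hxy)) as [[Hc _]|[v [Hv [Hpv Hw']]]]; [easy|].
  assert (Hl' : (length (remove dec x W) <= n)%nat).
  { pose proof (remove_length_lt dec W x Hx). lia. }
  assert (Hi' : incl (remove dec x W) S).
  { intros a Ha. apply in_remove in Ha. apply Hi; tauto. }
  pose proof (IH _ Hl' (NoDup_rem x Hn) Hi' v y Hv Hw') as Hvy.
  assert (HvS : In v S) by (apply Hi'; auto).
  assert (HxS : In x S) by (apply Hi; auto).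
  pose proof (Hdp x v HxS HvS) as Hxv.
  assert (Hxv' : d x v <= m * g x).
  { eapply Rle_trans; [apply Hxv|]. apply Rmult_le_compat_r; auto. }
  rewrite (@sumf_remove _ g (remove dec y W) x); [| apply NoDup_rem; auto| apply in_in_remove; auto].
  rewrite remove_remove_comm.
  pose proof (Hd3 x v y). lra.
Qed.

Definition vals W (phi : X -> X -> R) : list R :=
  map (fun p => phi (fst p) (snd p)) (list_prod W W).

Lemma vals_in W phi a b : In a W -> In b W -> In (phi a b) (vals W phi).
Proof.
  intros. unfold vals. apply in_map_iff. exists (a, b). split; auto.
  apply in_prod_iff; auto.
Qed.

Lemma vals_inv W phi r : In r (vals W phi) -> exists a b, In a W /\ In b W /\ r = phi a b.
Proof.
  unfold vals. intros H. apply in_map_iff in H as [[a b] [<- H]].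
  apply in_prod_iff in H. exists a, b; simpl; tauto.
Qed.

Lemma walk_value W phi m x y : In x W -> walk W phi m x y -> x <> y ->
  exists m', In m' (vals W phi) /\ m' <= m /\ walk W phi m' x y.
Proof.
  intros Hx H. induction H as [x|x z y Hz Hp Hw IH]; [easy|]. intros Hxy.
  destruct (dec z y) as [->|Hzy].
  - exists (phi x y). split; [apply vals_in; auto|]. split; auto.
    apply wstep with y; auto; [lra|constructor].
  - destruct (IH Hz Hzy) as [m1 [Hm1 [Hm1le Hw1]]].
    exists (Rmax (phi x z) m1). split; [|split].
    + destruct (Rle_dec (phi x z) m1).
      * rewrite Rmax_right; auto.
      * rewrite Rmax_left by lra. apply vals_in; auto.
    + apply Rmax_lub; auto.
    + apply wstep with z; auto; [apply Rmax_l|]. eapply walk_mono; [apply Rmax_r|auto].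
Qed.

End Walks.

Fixpoint lmin (P : R -> Prop) (V : list R) : option R :=
  match V with
  | [] => None
  | r :: V' =>
      match lmin P V' with
      | None => if excluded_middle_informative (P r) then Some r else None
      | Some m => if excluded_middle_informative (P r) then Some (Rmin r m) else Some m
      end
  end.

Lemma lmin_some P V : (exists r, In r V /\ P r) -> exists m, lmin P V = Some m.
Proof.
  induction V as [|r V IH]; simpl; [intros [? [[] _]]|]. intros [r' [Hr Hp]].
  destruct (lmin P V) eqn:E.
  - destruct (excluded_middle_informative (P r)); eauto.
  - destruct (excluded_middle_informative (P r)); eauto.
    destruct Hr as [->|Hr]; [easy|]. destruct IH as [m Hm]; [eauto|]. congruence.
Qed.

Lemma lmin_spec P V m : lmin P V = Some m ->
  In m V /\ P m /\ forall r, In r V -> P r -> m <= r.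
Proof.
  revert m. induction V as [|r V IH]; simpl; intros m; [easy|].
  destruct (lmin P V) as [m'|] eqn:E.
  - destruct (IH m' eq_refl) as [H1 [H2 H3]].
    destruct (excluded_middle_informative (P r)); intros Hm; inversion Hm; subst.
    + unfold Rmin. destruct (Rle_dec r m'); split; auto; split; auto.
      * intros t0 [->|Ht0] Hp; [lra|]. specialize (H3 t0 Ht0 Hp). lra.
      * intros t0 [->|Ht0] Hp; [lra|]. auto.
    + split; auto; split; auto. intros t0 [->|Ht0] Hp; [easy|auto].
  - destruct (excluded_middle_informative (P r)); intros Hm; inversion Hm; subst.
    split; auto; split; auto. intros t0 [->|Ht0] Hp; [lra|].
    exfalso. destruct (@lmin_some P V) as [mm Hmm]; eauto. congruence.
Qed.

Definition Ucl {X : Type} (W : list X) (phi : X -> X -> R) (x y : X) : R :=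
  if dec x y then 0 else
  match lmin (fun r => walk W phi r x y) (vals W phi) with Some m => m | None => 0 end.

Section Ucl.
Variable X : Type.
Variable W : list X.
Variable phi : X -> X -> R.
Hypothesis Hnn : forall a b, In a W -> In b W -> 0 <= phi a b.
Hypothesis Hsym : forall a b, In a W -> In b W -> phi a b = phi b a.

Lemma Ucl_spec x y : In x W -> In y W -> x <> y ->
  walk W phi (Ucl W phi x y) x y /\ In (Ucl W phi x y) (vals W phi) /\
  forall r, walk W phi r x y -> Ucl W phi x y <= r.
Proof.
  intros Hx Hy Hxy. unfold Ucl. destruct (dec x y); [easy|].
  destruct (@lmin_some (fun r => walk W phi r x y) (vals W phi)) as [m Hm].
  { exists (phi x y). split; [apply vals_in; auto|]. apply wstep with y; auto; [lra|constructor]. }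
  rewrite Hm. destruct (lmin_spec _ _ Hm) as [H1 [H2 H3]]. split; auto; split; auto.
  intros r Hr. destruct (walk_value Hx Hr n) as [m' [Hm' [Hle Hw]]].
  specialize (H3 m' Hm' Hw). lra.
Qed.

Lemma Ucl_refl x : Ucl W phi x x = 0.
Proof. unfold Ucl. destruct (dec x x); easy. Qed.

Lemma Ucl_nonneg x y : In x W -> In y W -> 0 <= Ucl W phi x y.
Proof.
  intros Hx Hy. destruct (dec x y) as [->|Hn]; [rewrite Ucl_refl; lra|].
  destruct (Ucl_spec Hx Hy Hn) as [_ [Hv _]]. apply vals_inv in Hv as [a [b [Ha [Hb ->]]]].
  auto.
Qed.

Lemma Ucl_le_phi x y : In x W -> In y W -> x <> y -> Ucl W phi x y <= phi x y.
Proof.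
  intros Hx Hy Hn. destruct (Ucl_spec Hx Hy Hn) as [_ [_ H]]. apply H.
  apply wstep with y; auto; [lra|constructor].
Qed.

Lemma Ucl_sym x y : In x W -> In y W -> Ucl W phi x y = Ucl W phi y x.
Proof.
  intros Hx Hy. destruct (dec x y) as [->|Hn]; auto.
  destruct (Ucl_spec Hx Hy Hn) as [W1 [_ M1]].
  destruct (Ucl_spec Hy Hx (not_eq_sym Hn)) as [W2 [_ M2]].
  apply Rle_antisym; [apply M1|apply M2]; apply walk_rev; auto.
Qed.

Lemma Ucl_ultra x y z : In x W -> In y W -> In z W ->
  Ucl W phi x z <= Rmax (Ucl W phi x y) (Ucl W phi y z).
Proof.
  intros Hx Hy Hz.
  destruct (dec x z) as [->|Hxz].
  { rewrite Ucl_refl. pose proof (@Ucl_nonneg z y Hz Hy). pose proof (Rmax_l (Ucl W phi z y) (Ucl W phi y z)). lra. }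
  destruct (dec x y) as [->|Hxy].
  { rewrite Ucl_refl. apply Rmax_r. }
  destruct (dec y z) as [->|Hyz].
  { rewrite Ucl_refl. apply Rmax_l. }
  destruct (Ucl_spec Hx Hy Hxy) as [W1 _].
  destruct (Ucl_spec Hy Hz Hyz) as [W2 _].
  destruct (Ucl_spec Hx Hz Hxz) as [_ [_ M]].
  apply M. apply walk_app with y.
  - eapply walk_mono; [apply Rmax_l|auto].
  - eapply walk_mono; [apply Rmax_r|auto].
Qed.

End Ucl.


Section Generic.
Variable X : Type.
Variable d : X -> X -> R.
Hypothesis Hd : is_metric d.
Variable Cl : update_seq X -> Prop.
Variable phi : update_seq X -> X -> X -> R.
Hypothesis Hnn : forall s a b, In a (arrived s) -> In b (arrived s) -> 0 <= phi s a b.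
Hypothesis Hps : forall s a b, In a (arrived s) -> In b (arrived s) -> phi s a b = phi s b a.
Hypothesis Hpers : forall s p a b, In a (arrived s) -> In b (arrived s) ->
  phi (s ++ [p]) a b = phi s a b.
Hypothesis Hlow : forall s, Cl s -> forall x y, In x (arrived s) -> In y (arrived s) -> x <> y ->
  exists g : X -> R, (forall a, 0 <= g a) /\
    (forall a b, In a (arrived s) -> In b (arrived s) -> d a b <= phi s a b * g a) /\
    sumf g (remove dec y (arrived s)) <= 1.

Definition Emb : online_embedding X := fun s => Ucl (arrived s) (phi s).

Lemma Emb_lower s x y : Cl s -> In x (arrived s) -> In y (arrived s) -> d x y <= Emb s x y.
Proof.
  intros HC Hx Hy. unfold Emb. pose proof Hd as [Hd0 [Hd1 _]].
  destruct (dec x y) as [->|Hn].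
  { rewrite Ucl_refl. assert (d y y = 0) by (apply Hd1; auto). lra. }
  destruct (Hlow HC Hx Hy Hn) as [g [Hg [Hdp Hs]]].
  destruct (@Ucl_spec _ (arrived s) (phi s) x y Hx Hy Hn) as [Hw _].
  pose proof (@Ucl_nonneg _ (arrived s) (phi s) (@Hnn s) x y Hx Hy) as Hm.
  pose proof (@walk_bound _ d Hd (arrived s) (phi s) g _ Hg Hdp Hm (length (arrived s))
    (arrived s) (Nat.le_refl _) (arrived_nodup s) (incl_refl _) x y Hx Hw) as H.
  pose proof (sumf_nonneg g (remove dec y (arrived s)) Hg).
  eapply Rle_trans; [apply H|]. 
  rewrite <- (Rmult_1_r (Ucl (arrived s) (phi s) x y)) at 2.
  apply Rmult_le_compat_l; auto.
Qed.

Theorem Emb_monotone : monotone_HST_embedding d Cl Emb.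
Proof.
  unfold monotone_HST_embedding. intros s sg HC. cbv zeta.
  pose proof Hd as [Hd0 [Hd1 [Hd2 Hd3]]].
  split; [|split].
  - destruct (alive_list (s ++ [sg])) as [l [Hn Hl]].
    destruct l as [|x0 l'] eqn:El.
    { left. intros x Hx. apply Hl in Hx. easy. }
    right. set (W := arrived (s ++ [sg])).
    assert (Hnn' := @Hnn (s ++ [sg])). fold W in Hnn'.
    assert (Hps' := @Hps (s ++ [sg])). fold W in Hps'.
    assert (B0 : forall x, In x W -> Emb (s ++ [sg]) x x = 0) by (intros; apply Ucl_refl).
    assert (B1 : forall x y, In x W -> In y W -> x <> y -> 0 < Emb (s ++ [sg]) x y).
    { intros x y Hx Hy Hxy. apply Rlt_le_trans with (d x y).
      - destruct (Hd0 x y) as [Hlt|Heq]; auto. exfalso. apply Hxy, Hd1. auto.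
      - apply Emb_lower; auto. }
    assert (B2 : forall x y, In x W -> In y W -> Emb (s ++ [sg]) x y = Emb (s ++ [sg]) y x).
    { intros x y Hx Hy. apply (@Ucl_sym _ W _ Hps'); auto. }
    assert (B3 : forall x y z, In x W -> In y W -> In z W ->
      Emb (s ++ [sg]) x z <= Rmax (Emb (s ++ [sg]) x y) (Emb (s ++ [sg]) y z)).
    { intros x y z Hx Hy Hz. apply (@Ucl_ultra _ W _ Hnn'); auto. }
    destruct (@build_tree_n X (fun x => In x W) (Emb (s ++ [sg])) B0 B1 B2 B3 (length l) l)
      as [T [Hw [HnT [Hm [Hlca _]]]]].
    + subst; auto.
    + subst; auto.
    + subst; easy.
    + intros x Hx. apply alive_arrived. apply Hl. subst; auto.
    + exists 1, T. split; [lra|]. split; auto. split; auto. split.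
      * intros x. rewrite Hl, <- Hm. subst; tauto.
      * intros u v Hu Hv. apply Hlca; subst; apply Hl; auto.
  - intros u v Hu Hv. apply Emb_lower; auto; apply alive_arrived; auto.
  - intros u v Hu' Hv' Hu Hv. unfold Emb.
    apply alive_arrived in Hu', Hv', Hu, Hv.
    destruct (dec u v) as [->|Huv]; [rewrite !Ucl_refl; lra|].
    destruct (@Ucl_spec _ (arrived s) (phi s) u v Hu' Hv' Huv) as [Hw _].
    destruct (@Ucl_spec _ (arrived (s ++ [sg])) (phi (s ++ [sg])) u v Hu Hv Huv)
      as [_ [_ Hmin]].
    apply Hmin. eapply walk_sub; [| |exact Hu'|exact Hw].
    + intros a Ha. apply arrived_incl; auto.
    + intros a b Ha Hb. apply Hpers; auto.
Qed.

Theorem Emb_distortion lam :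
  (forall s, Cl s -> forall u v, In u (arrived s) -> In v (arrived s) -> u <> v ->
     phi s u v <= lam * d u v) -> has_distortion d Cl Emb lam.
Proof.
  intros H s HC u v Hu Hv. apply alive_arrived in Hu, Hv. unfold Emb.
  destruct (dec u v) as [->|Huv].
  - rewrite Ucl_refl. destruct Hd as [_ [Hd1 _]]. assert (d v v = 0) by (apply Hd1; auto).
    rewrite H0. lra.
  - eapply Rle_trans; [apply Ucl_le_phi; auto|]. apply H; auto.
Qed.

End Generic.


Lemma two_le_len (X : Type) (l : list X) x y :
  In x l -> In y l -> x <> y -> (2 <= length l)%nat.
Proof.
  intros Hx Hy Hn. pose proof (remove_length_lt dec l x Hx).
  assert (In y (remove dec x l)) by (apply in_in_remove; auto).
  destruct (remove dec x l); simpl in *; [easy|lia].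
Qed.

Lemma part1 (n : nat) (X : Type) (d : X -> X -> R) : is_metric d ->
  exists E : online_embedding X,
    monotone_HST_embedding d (at_most_n_points n) E /\
    has_distortion d (at_most_n_points n) E (INR n - 1).
Proof.
  intros Hd. pose proof Hd as [Hd0 [Hd1 [Hd2 Hd3]]].
  set (phi := fun (s : update_seq X) a b => Rmax 0 (INR n - 1) * d a b).
  assert (Hn2 : forall (s : update_seq X) (x y : X), at_most_n_points n s -> In x (arrived s) -> In y (arrived s) ->
     x <> y -> (2 <= n)%nat).
  { intros s x y Hs Hx Hy Hxy. pose proof (arrived_len Hs).
    pose proof (@two_le_len _ _ x y Hx Hy Hxy). lia. }
  exists (Emb phi). split.
  - apply Emb_monotone; auto.
    + intros s a b _ _. unfold phi. apply Rmult_le_pos; [apply Rmax_l|auto].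
    + intros s a b _ _. unfold phi. rewrite Hd2; auto.
    + intros s Hs x y Hx Hy Hxy. pose proof (Hn2 s x y Hs Hx Hy Hxy) as Hn.
      assert (HnR : 2 <= INR n) by (change 2 with (INR 2); apply le_INR; auto).
      exists (fun _ => / (INR n - 1)). split; [|split].
      * intros _. apply Rlt_le, Rinv_0_lt_compat. lra.
      * intros a b _ _. unfold phi. rewrite Rmax_right by lra. right. field. lra.
      * rewrite sumf_const. pose proof (arrived_len Hs).
        pose proof (remove_length_lt dec (arrived s) y Hy).
        assert (Hle : (length (remove dec y (arrived s)) + 1 <= n)%nat) by lia.
        apply le_INR in Hle. rewrite plus_INR in Hle. simpl in Hle.
        apply Rmult_le_reg_r with (INR n - 1); [lra|].
        rewrite Rmult_assoc, Rinv_l by lra. lra.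
  - apply Emb_distortion; auto.
    intros s Hs u v Hu Hv Huv. pose proof (Hn2 s u v Hs Hu Hv Huv) as Hn.
    assert (HnR : 2 <= INR n) by (change 2 with (INR 2); apply le_INR; auto).
    unfold phi. rewrite Rmax_right by lra. lra.
Qed.


Definition ins {X : Type} (p : nat -> X) (t : nat) : update_seq X :=
  map (fun i => (p i, true)) (seq 0 t).

Lemma ins_S (X : Type) (p : nat -> X) t : ins p (S t) = ins p t ++ [(p t, true)].
Proof. unfold ins. rewrite seq_S, map_app. reflexivity. Qed.

Lemma alive_ins (X : Type) (p : nat -> X) t x :
  alive (ins p t) x <-> exists i, (i < t)%nat /\ x = p i.
Proof.
  induction t as [|t IH].
  - unfold ins, alive; simpl. split; [easy|]. intros [i [Hi _]]; lia.
  - rewrite ins_S, alive_app1. simpl. rewrite IH. split.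
    + intros [->|[i [Hi ->]]]; [exists t; split; auto|exists i; split; auto].
    + intros [i [Hi ->]]. destruct (Nat.eq_dec i t) as [->|Hne]; [left; auto|].
      right. exists i; split; auto. lia.
Qed.

Lemma amnp_ins (X : Type) (p : nat -> X) t n : (t <= n)%nat -> at_most_n_points n (ins p t).
Proof.
  intros Ht. exists (map p (seq 0 t)). split.
  - rewrite length_map, length_seq; auto.
  - intros x Hx. unfold ins in Hx. apply in_map_iff in Hx as [i [Hi Hs]].
    inversion Hi; subst. apply in_map; auto.
Qed.

Lemma mono_chain (X : Type) d (C : update_seq X -> Prop) E (p : nat -> X) N :
  monotone_HST_embedding d C E -> (forall t, (t <= N)%nat -> C (ins p t)) ->
  forall k t1 i j, (t1 + k <= N)%nat -> (i < t1)%nat -> (j < t1)%nat ->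
  E (ins p (t1 + k)) (p i) (p j) <= E (ins p t1) (p i) (p j).
Proof.
  intros Hm HC. induction k as [|k IH]; intros t1 i j Hk Hi Hj.
  - rewrite Nat.add_0_r. lra.
  - apply Rle_trans with (E (ins p (t1 + k)%nat) (p i) (p j)); [|apply IH; lia].
    rewrite Nat.add_succ_r, ins_S.
    destruct (Hm (ins p (t1 + k)%nat) (p (t1 + k)%nat, true)) as [_ [_ H3]].
    { rewrite <- ins_S. apply HC. lia. }
    apply H3.
    + apply alive_ins; exists i; split; [lia|reflexivity].
    + apply alive_ins; exists j; split; [lia|reflexivity].
    + rewrite <- ins_S; apply alive_ins; exists i; split; [lia|reflexivity].
    + rewrite <- ins_S; apply alive_ins; exists j; split; [lia|reflexivity].
Qed.

Lemma hst_chain (X : Type) (L : X -> Prop) dt (q : nat -> X) B m :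
  in_HSTs L dt -> (forall i, (i <= m)%nat -> L (q i)) ->
  (forall i, (i < m)%nat -> dt (q i) (q (S i)) <= B) -> 0 <= B -> dt (q 0%nat) (q m) <= B.
Proof.
  intros HT. induction m as [|m IH]; intros HL Hs HB.
  - rewrite (@hst_zero _ L dt (q 0%nat) HT); auto.
  - eapply Rle_trans; [apply (@hst_ultra _ L dt (q 0%nat) (q m) (q (S m)) HT); apply HL; lia|].
    apply Rmax_lub; auto.
Qed.

Lemma lower_core (X : Type) d (C : update_seq X -> Prop) E (p : nat -> X) N B :
  monotone_HST_embedding d C E -> (forall t, (t <= S N)%nat -> C (ins p t)) ->
  (forall i, (i < N)%nat -> E (ins p (S N)) (p i) (p (S i)) <= B) -> 0 <= B ->
  d (p 0%nat) (p N) <= B.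
Proof.
  intros Hm HC Hs HB.
  destruct (Hm (ins p N) (p N, true)) as [H1 [H2 _]].
  { rewrite <- ins_S. apply HC; lia. }
  rewrite <- ins_S in H1, H2.
  apply Rle_trans with (E (ins p (S N)) (p 0%nat) (p N)).
  { apply H2; apply alive_ins; [exists 0%nat|exists N]; split; (lia || reflexivity). }
  apply hst_chain with (L := alive (ins p (S N))); auto.
  intros i Hi. apply alive_ins. exists i; split; auto; lia.
Qed.

Definition dR (x y : R) : R := Rabs (x - y).

Lemma dR_metric : is_metric dR.
Proof.
  unfold is_metric, dR. split; [|split; [|split]].
  - intros; apply Rabs_pos.
  - intros x y. unfold Rabs. destruct (Rcase_abs (x - y)); split; intros; lra.
  - intros; apply Rabs_minus_sym.
  - intros x y z. replace (x - z) with ((x - y) + (y - z)) by ring. apply Rabs_triang.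
Qed.

Lemma part2 (n : nat) : (2 <= n)%nat ->
  exists (X : Type) (d : X -> X -> R), is_metric d /\
    forall (E : online_embedding X) (lam : R),
      monotone_HST_embedding d (at_most_n_points n) E ->
      has_distortion d (at_most_n_points n) E lam -> INR n - 1 <= lam.
Proof.
  intros Hn. exists R, dR. split; [apply dR_metric|]. intros E lam Hm Hdist.
  destruct n as [|N]; [lia|].
  assert (H := @lower_core R dR (at_most_n_points (S N)) E INR N (Rmax lam 0) Hm).
  assert (HdN : dR (INR 0) (INR N) = INR (S N) - 1).
  { unfold dR. rewrite S_INR. simpl. rewrite Rabs_minus_sym, Rminus_0_r.
    rewrite Rabs_right; [lra| apply Rle_ge, pos_INR]. }
  rewrite HdN in H.
  assert (INR (S N) - 1 <= Rmax lam 0).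
  { apply H.
    - intros t Ht. apply amnp_ins; auto.
    - intros i Hi. eapply Rle_trans; [apply Hdist|].
      + apply amnp_ins; auto.
      + apply alive_ins; exists i; split; auto; lia.
      + apply alive_ins; exists (S i); split; auto; lia.
      + unfold dR. rewrite S_INR. replace (INR i - (INR i + 1)) with (-1) by ring.
        rewrite Rabs_left by lra. pose proof (Rmax_l lam 0). lra.
    - apply Rmax_r. }
  assert (1 <= INR N) by (change 1 with (INR 1); apply le_INR; lia).
  rewrite S_INR in H0. destruct (Rle_dec lam 0).
  - rewrite Rmax_right in H0 by lra. lra.
  - rewrite Rmax_left in H0 by lra. rewrite S_INR. lra.
Qed.


Lemma ln_le_xm1 x : 0 < x -> ln x <= x - 1.
Proof.
  intros Hx. destruct (Req_dec (ln x) 0) as [H|H].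
  - assert (x = 1) by (rewrite <- (exp_ln x Hx), H, exp_0; auto). lra.
  - pose proof (exp_ineq1 _ H). rewrite exp_ln in H0; auto. lra.
Qed.

Lemma ln_pos_gt1 x : 1 < x -> 0 < ln x.
Proof. intros. rewrite <- ln_1. apply ln_increasing; lra. Qed.

Lemma ln_le_mono x y : 0 < x -> x <= y -> ln x <= ln y.
Proof.
  intros Hx Hxy. destruct (Req_dec x y) as [->|Hn]; [lra|].
  apply Rlt_le, ln_increasing; lra.
Qed.

Lemma ln_diff_le a b : 0 < a -> a <= b -> ln b - ln a <= (b - a) / a.
Proof.
  intros Ha Hab.
  assert (E : ln b - ln a = ln (b * / a)).
  { rewrite ln_mult, ln_Rinv; try lra; try (apply Rinv_0_lt_compat; lra). }
  rewrite E. eapply Rle_trans; [apply ln_le_xm1|].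
  - apply Rmult_lt_0_compat; [lra| apply Rinv_0_lt_compat; lra].
  - right. field. lra.
Qed.

Lemma ln_diff_ge a b : 0 < a -> a <= b -> (b - a) / b <= ln b - ln a.
Proof.
  intros Ha Hab.
  assert (E : ln b - ln a = - ln (a * / b)).
  { rewrite ln_mult, ln_Rinv; try lra; try (apply Rinv_0_lt_compat; lra). }
  rewrite E. assert (ln (a * / b) <= a * / b - 1).
  { apply ln_le_xm1. apply Rmult_lt_0_compat; [lra| apply Rinv_0_lt_compat; lra]. }
  assert ((b - a) / b = 1 - a * / b) by (field; lra). lra.
Qed.

Lemma lnln_step T : 2 <= T -> ln (ln (T + 1)) - ln (ln T) <= / (T * ln T).
Proof.
  intros HT. assert (Ha : 0 < ln T) by (apply ln_pos_gt1; lra).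
  assert (Hab : ln T <= ln (T + 1)) by (apply ln_le_mono; lra).
  eapply Rle_trans; [apply ln_diff_le; auto|].
  assert (Hb : ln (T + 1) - ln T <= / T).
  { eapply Rle_trans; [apply ln_diff_le; lra|]. right. field. lra. }
  unfold Rdiv. rewrite Rinv_mult. apply Rmult_le_compat_r; auto.
  apply Rlt_le, Rinv_0_lt_compat; auto.
Qed.

Definition Tf (N0 j : nat) : nat := Nat.max (j + 2) N0.
Definition gapf (N0 j : nat) : R := / (INR (Tf N0 j) * ln (INR (Tf N0 j))).
Fixpoint posf (N0 j : nat) : R :=
  match j with O => 0 | S j' => posf N0 j' + gapf N0 j' end.

Lemma Tf_ge2 N0 j : 2 <= INR (Tf N0 j).
Proof. change 2 with (INR 2). apply le_INR. unfold Tf. lia. Qed.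

Lemma gapf_pos N0 j : 0 < gapf N0 j.
Proof.
  unfold gapf. pose proof (Tf_ge2 N0 j). apply Rinv_0_lt_compat.
  apply Rmult_lt_0_compat; [lra| apply ln_pos_gt1; lra].
Qed.

Lemma posf_nonneg N0 j : 0 <= posf N0 j.
Proof. induction j; simpl; [lra|]. pose proof (gapf_pos N0 j). lra. Qed.

Lemma posf_grow N0 k :
  ln (ln (INR (N0 + k) + 2)) - ln (ln (INR N0 + 2)) <= posf N0 (N0 + k).
Proof.
  induction k as [|k IH].
  - rewrite Nat.add_0_r. pose proof (posf_nonneg N0 N0). lra.
  - rewrite Nat.add_succ_r. simpl posf.
    assert (HT : Tf N0 (N0 + k) = (N0 + k + 2)%nat) by (unfold Tf; lia).
    unfold gapf. rewrite HT.
    assert (HY : INR (N0 + k + 2) = INR (N0 + k) + 2) by (rewrite plus_INR; simpl; lra).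
    rewrite HY. rewrite S_INR.
    pose proof (pos_INR (N0 + k)).
    assert (H2 : 2 <= INR (N0 + k) + 2) by lra. pose proof (lnln_step H2).
    replace (INR (N0 + k) + 1 + 2) with (INR (N0 + k) + 2 + 1) by ring. lra.
Qed.

Lemma part4 : exists (c : R) (k : nat), 0 < c /\
     exists (X : Type) (d : X -> X -> R), is_metric d /\
       forall E : online_embedding X,
         monotone_HST_embedding d (fun _ => True) E ->
         forall N0 : nat, exists n : nat, (N0 <= n)%nat /\
           ~ has_distortion d (at_most_n_points n) E
               (c * INR n * ln (INR n) / (ln (ln (INR n))) ^ k).
Proof.
  exists 1, 0%nat. split; [lra|]. exists R, dR. split; [apply dR_metric|].
  intros E Hm N0. apply NNPP. intros Hno.
  assert (Hall : forall n, (N0 <= n)%nat -> has_distortion dR (at_most_n_points n) E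
     (1 * INR n * ln (INR n) / ln (ln (INR n)) ^ 0)).
  { intros n Hn. apply NNPP. intros H. apply Hno. eauto. }
  set (L0 := ln (ln (INR N0 + 2))).
  destruct (INR_unbounded (exp (exp (1 + L0)))) as [k Hk].
  pose proof (posf_grow N0 k) as Hg. fold L0 in Hg.
  assert (Hbig : 1 + L0 < ln (ln (INR (N0 + k) + 2))).
  { assert (INR k <= INR (N0 + k)) by (apply le_INR; lia).
    rewrite <- (ln_exp (1 + L0)). apply ln_increasing; [apply exp_pos|].
    rewrite <- (ln_exp (exp (1 + L0))). apply ln_increasing; [apply exp_pos|]. lra. }
  set (p := posf N0).
  assert (Hlow := @lower_core R dR (fun _ => True) E p (N0 + k) 1 Hm (fun _ _ => I)).
  assert (Hd : dR (p 0%nat) (p (N0 + k)%nat) <= 1).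
  { apply Hlow; [|lra]. intros i Hi.
    set (t1 := Tf N0 i).
    assert (Ht1 : (t1 <= S (N0 + k))%nat) by (unfold t1, Tf; lia).
    replace (S (N0 + k)) with (t1 + (S (N0 + k) - t1))%nat by lia.
    eapply Rle_trans; [apply (@mono_chain R dR (fun _ => True) E p (t1 + (S (N0 + k) - t1))%nat Hm (fun _ _ => I)); unfold t1, Tf; lia|].
    assert (HN : (N0 <= t1)%nat) by (unfold t1, Tf; lia).
    eapply Rle_trans; [apply (Hall t1 HN)|].
    - apply amnp_ins; auto.
    - apply alive_ins. exists i; split; [unfold t1, Tf; lia|reflexivity].
    - apply alive_ins. exists (S i); split; [unfold t1, Tf; lia|reflexivity].
    - unfold dR, p. simpl posf. pose proof (gapf_pos N0 i).
      replace (posf N0 i - (posf N0 i + gapf N0 i)) with (- gapf N0 i) by ring.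
      rewrite Rabs_left by lra. unfold gapf. fold t1.
      pose proof (Tf_ge2 N0 i). fold t1 in H0.
      assert (0 < ln (INR t1)) by (apply ln_pos_gt1; lra).
      right. simpl. field. split; lra. }
  unfold dR, p in Hd. simpl posf in Hd. rewrite Rminus_0_l, Rabs_Ropp in Hd.
  rewrite Rabs_right in Hd by (apply Rle_ge, posf_nonneg). lra.
Qed.


Definition Kc : R := exp (exp 1).
Definition Lf (x : R) : R := ln (ln x).
Definition Pf (x : R) : R := x * ln x * (Lf x) ^ 2.
Definition cf (j : nat) : R := Pf (INR j + 1 + Kc).

Lemma exp_le_mono x y : x <= y -> exp x <= exp y.
Proof. intros H. destruct (Req_dec x y) as [->|Hn]; [lra|]. apply Rlt_le, exp_increasing; lra. Qed.

Lemma exp1_ge2 : 2 <= exp 1.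
Proof. pose proof (exp_ineq1_le 1). lra. Qed.

Lemma Kc_pos : 0 < Kc.
Proof. apply exp_pos. Qed.

Lemma ln_ge_K x : Kc <= x -> exp 1 <= ln x.
Proof. intros H. rewrite <- (ln_exp (exp 1)). apply ln_le_mono; auto. apply Kc_pos. Qed.

Lemma Lf_ge_K x : Kc <= x -> 1 <= Lf x.
Proof.
  intros H. unfold Lf. rewrite <- (ln_exp 1). apply ln_le_mono; [apply exp_pos|].
  apply ln_ge_K; auto.
Qed.

Lemma Lf_K : Lf Kc = 1.
Proof. unfold Lf, Kc. rewrite !ln_exp. reflexivity. Qed.

Lemma Pf_pos x : Kc <= x -> 0 < Pf x.
Proof.
  intros H. pose proof Kc_pos. pose proof (ln_ge_K H). pose proof exp1_ge2. pose proof (Lf_ge_K H).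
  unfold Pf. apply Rmult_lt_0_compat; [apply Rmult_lt_0_compat; lra|]. apply pow_lt. lra.
Qed.

Lemma Pf_mono x y : Kc <= x -> x <= y -> Pf x <= Pf y.
Proof.
  intros Hx Hxy. pose proof Kc_pos. pose proof exp1_ge2.
  pose proof (ln_ge_K Hx). pose proof (Lf_ge_K Hx).
  assert (Hln : ln x <= ln y) by (apply ln_le_mono; lra).
  assert (HL : Lf x <= Lf y) by (unfold Lf; apply ln_le_mono; lra).
  unfold Pf. apply Rmult_le_compat.
  - apply Rmult_le_pos; lra.
  - apply pow_le; lra.
  - apply Rmult_le_compat; lra.
  - apply pow_incr; lra.
Qed.

Lemma cf_pos j : 0 < cf j.
Proof. unfold cf. apply Pf_pos. pose proof (pos_INR j). lra. Qed.

Lemma cf_mono i j : (i <= j)%nat -> cf i <= cf j.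
Proof.
  intros H. unfold cf. apply le_INR in H. pose proof (pos_INR i). apply Pf_mono; lra.
Qed.

Lemma tele x : Kc <= x -> / Pf (x + 1) <= / Lf x - / Lf (x + 1).
Proof.
  intros Hx. pose proof Kc_pos. pose proof exp1_ge2.
  pose proof (ln_ge_K Hx) as Ha.
  assert (Hx1 : Kc <= x + 1) by lra.
  pose proof (ln_ge_K Hx1) as Hb.
  pose proof (Lf_ge_K Hx) as HLa. pose proof (Lf_ge_K Hx1) as HLb.
  assert (Hab : ln x <= ln (x + 1)) by (apply ln_le_mono; lra).
  assert (HLab : Lf x <= Lf (x + 1)) by (unfold Lf; apply ln_le_mono; lra).
  assert (H1 : (ln (x + 1) - ln x) / ln (x + 1) <= Lf (x + 1) - Lf x).
  { unfold Lf. apply ln_diff_ge; lra. }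
  assert (H2 : (x + 1 - x) / (x + 1) <= ln (x + 1) - ln x) by (apply ln_diff_ge; lra).
  set (a := ln x) in *. set (b := ln (x + 1)) in *. set (La := Lf x) in *.
  set (Lb := Lf (x + 1)) in *. set (D := Lb - La).
  set (q := (x + 1) * b).
  assert (Hq : 0 < q) by (unfold q; apply Rmult_lt_0_compat; lra).
  assert (HDq : 1 <= D * q).
  { unfold q, D.
    assert (E1 : (x + 1 - x) / (x + 1) = / (x + 1)) by (field; lra).
    rewrite E1 in H2.
    assert (H3 : / (x + 1) / b <= Lb - La).
    { eapply Rle_trans; [|apply H1]. unfold Rdiv. apply Rmult_le_compat_r.
      - apply Rlt_le, Rinv_0_lt_compat; lra.
      - auto. }
    assert (E2 : / (x + 1) / b * ((x + 1) * b) = 1) by (field; lra).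
    apply Rle_trans with (/ (x + 1) / b * ((x + 1) * b)); [rewrite E2; lra|].
    apply Rmult_le_compat_r; [apply Rmult_le_pos; lra|auto]. }
  unfold Pf. fold a. fold b. fold Lb. change (x + 1) with (x + 1).
  replace ((x + 1) * b * Lb ^ 2) with (q * Lb ^ 2) by (unfold q; ring).
  replace (/ (q * Lb ^ 2)) with (La * / (q * La * Lb ^ 2)) by (field; lra).
  replace (/ La - / Lb) with (D * q * Lb * / (q * La * Lb ^ 2)) by (unfold D; field; lra).
  apply Rmult_le_compat_r.
  - apply Rlt_le, Rinv_0_lt_compat. apply Rmult_lt_0_compat; [apply Rmult_lt_0_compat; lra|].
    apply pow_lt; lra.
  - nra.
Qed.

Lemma cf_sum N : sumN (fun j => / cf j) N <= 1 - / Lf (INR N + Kc).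
Proof.
  induction N as [|N IH].
  - simpl. rewrite Rplus_0_l, Lf_K. lra.
  - simpl sumN. rewrite S_INR. change (cf N) with (Pf (INR N + 1 + Kc)).
    pose proof (pos_INR N).
    pose proof (tele (x := INR N + Kc) ltac:(lra)).
    replace (INR N + 1 + Kc) with (INR N + Kc + 1) by ring. lra.
Qed.

Lemma cf_sum_le1 N : sumN (fun j => / cf j) N <= 1.
Proof.
  pose proof (cf_sum N). pose proof (pos_INR N).
  assert (Kc <= INR N + Kc) by lra. pose proof (Lf_ge_K H1).
  assert (0 < / Lf (INR N + Kc)) by (apply Rinv_0_lt_compat; lra). lra.
Qed.

Lemma Kc_le27 : Kc <= 27.
Proof.
  unfold Kc. eapply Rle_trans; [apply exp_le_mono, exp_le_3|].
  replace 3 with (1 + 1 + 1) by ring. rewrite !exp_plus.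
  pose proof exp_le_3. pose proof (exp_pos 1).
  assert (exp 1 * exp 1 <= 9) by nra. nra.
Qed.

Lemma Pf_bound x : Kc <= x -> Pf (x + Kc) <= 16 * x * ln x * (ln (ln x)) ^ 2.
Proof.
  intros Hx. pose proof Kc_pos. pose proof exp1_ge2.
  pose proof (ln_ge_K Hx) as Ha. pose proof (Lf_ge_K Hx) as HL.
  eapply Rle_trans; [apply Pf_mono with (y := 2 * x); lra|].
  assert (Hl2 : ln 2 <= 1) by (assert (0 < 2) as H2 by lra; pose proof (ln_le_xm1 H2); lra).
  assert (Hl2p : 0 < ln 2) by (apply ln_pos_gt1; lra).
  assert (E1 : ln (2 * x) = ln 2 + ln x) by (apply ln_mult; lra).
  assert (Hb : ln (2 * x) <= 2 * ln x) by lra.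
  assert (HK2 : Kc <= 2 * x) by lra.
  pose proof (Lf_ge_K HK2) as HL2.
  assert (HLb : Lf (2 * x) <= 2 * Lf x).
  { unfold Lf at 1. eapply Rle_trans; [apply ln_le_mono with (y := 2 * ln x)|].
    - pose proof (ln_ge_K HK2). lra.
    - auto.
    - rewrite ln_mult by lra. fold (Lf x). lra. }
  unfold Pf. fold (Lf x).
  replace (16 * x * ln x * Lf x ^ 2) with ((2 * x) * (2 * ln x) * (2 * Lf x) ^ 2) by ring.
  apply Rmult_le_compat.
  - apply Rmult_le_pos; lra.
  - apply pow_le; lra.
  - apply Rmult_le_compat; lra.
  - apply pow_incr; lra.
Qed.


Lemma part3 : exists (C : R) (k : nat) (N0 : nat), 0 < C /\
     forall (X : Type) (d : X -> X -> R), is_metric d ->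
       exists E : online_embedding X,
         monotone_HST_embedding d (fun _ => True) E /\
         forall n : nat, (N0 <= n)%nat ->
           has_distortion d (at_most_n_points n) E
             (C * INR n * ln (INR n) * (ln (ln (INR n))) ^ k).
Proof.
  exists 16, 2%nat, 27%nat. split; [lra|]. intros X d Hd.
  pose proof Hd as [Hd0 [Hd1 [Hd2 Hd3]]].
  set (phi := fun (s : update_seq X) a b =>
    cf (Nat.max (idx a (arrived s)) (idx b (arrived s))) * d a b).
  assert (Hnn : forall s a b, In a (arrived s) -> In b (arrived s) -> 0 <= phi s a b).
  { intros s a b _ _. unfold phi. apply Rmult_le_pos; auto. apply Rlt_le, cf_pos. }
  assert (Hps : forall s a b, In a (arrived s) -> In b (arrived s) -> phi s a b = phi s b a).
  { intros s a b _ _. unfold phi. rewrite Nat.max_comm, Hd2. auto. }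
  assert (Hpers : forall s p a b, In a (arrived s) -> In b (arrived s) ->
    phi (s ++ [p]) a b = phi s a b).
  { intros s p a b Ha Hb. unfold phi. destruct (arrived_prefix s p) as [t ->].
    rewrite !idx_app; auto. }
  exists (Emb phi). split.
  - apply Emb_monotone; auto.
    intros s _ x y Hx Hy Hxy.
    exists (fun a => / cf (idx a (arrived s))). split; [|split].
    + intros a. apply Rlt_le, Rinv_0_lt_compat, cf_pos.
    + intros a b Ha Hb. unfold phi.
      set (ia := idx a (arrived s)). set (m := Nat.max ia (idx b (arrived s))).
      assert (Hc : cf ia <= cf m) by (apply cf_mono; unfold m; lia).
      pose proof (cf_pos ia). pose proof (Hd0 a b).
      apply Rmult_le_reg_r with (cf ia); auto.
      replace (cf m * d a b * / cf ia * cf ia) with (cf m * d a b) by (field; lra).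
      nra.
    + eapply Rle_trans; [apply sumf_remove_le|].
      * intros a. apply Rlt_le, Rinv_0_lt_compat, cf_pos.
      * rewrite (@sumf_idx _ (arrived s) (fun j => / cf j) (arrived_nodup s)).
        apply cf_sum_le1.
  - intros n Hn. apply Emb_distortion; auto.
    intros s Hs u v Hu Hv Huv. unfold phi.
    pose proof (arrived_len Hs).
    pose proof (@idx_lt _ u _ Hu). pose proof (@idx_lt _ v _ Hv).
    destruct n as [|n']; [lia|].
    assert (Hm : cf (Nat.max (idx u (arrived s)) (idx v (arrived s))) <= cf n').
    { apply cf_mono. lia. }
    assert (HnK : Kc <= INR (S n')).
    { pose proof Kc_le27. assert (H27 : (INR 27 <= INR (S n'))) by (apply le_INR; lia).
      assert (E27 : INR 27 = 27) by (rewrite INR_IZR_INZ; reflexivity).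
      rewrite E27 in H27. lra. }
    pose proof (Pf_bound HnK).
    assert (Ec : cf n' = Pf (INR (S n') + Kc)) by (unfold cf; rewrite S_INR; reflexivity).
    pose proof (Hd0 u v).
    apply Rmult_le_compat_r; auto. lra.
Qed.


Theorem mainTheorem2 :
  (* (1) knowing n: distortion n - 1 is achievable for every metric space *)
  (forall (n : nat) (X : Type) (d : X -> X -> R), is_metric d ->
     exists E : online_embedding X,
       monotone_HST_embedding d (at_most_n_points n) E /\
       has_distortion d (at_most_n_points n) E (INR n - 1)) /\
  (* (2) tightness: no embedding of up to n points from all metric spaces
         achieves distortion less than n - 1 *)
  (forall n : nat, (2 <= n)%nat ->
     exists (X : Type) (d : X -> X -> R), is_metric d /\
       forall (E : online_embedding X) (lam : R),
         monotone_HST_embedding d (at_most_n_points n) E ->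
         has_distortion d (at_most_n_points n) E lam ->
         INR n - 1 <= lam) /\
  (* (3) without knowledge of n: distortion n * log n * polyloglog n *)
  (exists (C : R) (k : nat) (N0 : nat), 0 < C /\
     forall (X : Type) (d : X -> X -> R), is_metric d ->
       exists E : online_embedding X,
         monotone_HST_embedding d (fun _ => True) E /\
         forall n : nat, (N0 <= n)%nat ->
           has_distortion d (at_most_n_points n) E
             (C * INR n * ln (INR n) * (ln (ln (INR n))) ^ k)) /\
  (* (4) tightness without knowledge of n: n * log n / polyloglog n is not
         beaten (for infinitely many n) by any single embedding *)
  (exists (c : R) (k : nat), 0 < c /\
     exists (X : Type) (d : X -> X -> R), is_metric d /\
       forall E : online_embedding X,
         monotone_HST_embedding d (fun _ => True) E ->
         forall N0 : nat, exists n : nat, (N0 <= n)%nat /\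
           ~ has_distortion d (at_most_n_points n) E
               (c * INR n * ln (INR n) / (ln (ln (INR n))) ^ k)).
Proof.
  split; [exact part1|]. split; [exact part2|]. split; [exact part3|exact part4].
Qed.
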